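(* Let $\rho^{AB}=\frac14\big(\mathbb{I}\otimes\mathbb{I}+\vec x\cdot\vec\sigma\otimes\mathbb{I}+\sum_{i=1}^3 t_i\,\sigma_i\otimes\sigma_i\big)$ be a two-qubit density matrix (i.e. $\vec y=0$) with $\vec x\in\mathbb{R}^3$ and $T=\mathrm{diag}\{t_1,t_2,t_3\}$ satisfying $T^t\vec x=0$. Then $$\min_{\{\Pi_k^B\}}S(\rho^A|\{\Pi_k^B\})=h_2\!\left(\frac{1+\sqrt{|\vec x|^2+t_{\max}^2}}{2}\right),\qquad t_{\max}=\max\{|t_1|,|t_2|,|t_3|\},$$ the minimum being over all von Neumann measurements on qubit $B$, and it is attained when the measurement direction $\hat n$ is an eigenvector of $T^tT$ for its largest eigenvalue $t_{\max}^2$.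
   Context: $\sigma_i$ are the Pauli matrices, $\vec a\cdot\vec\sigma=\sum_i a_i\sigma_i$. A von Neumann measurement on $B$ with direction $\hat n$ (unit vector in $\mathbb{R}^3$) is $\Pi_k^B=\frac12(\mathbb{I}\pm\hat n\cdot\vec\sigma)$, $k=0,1$; $p_k=\mathrm{Tr}[(\mathbb{I}\otimes\Pi_k^B)\rho^{AB}(\mathbb{I}\otimes\Pi_k^B)]$, $\rho^A_k=\mathrm{Tr}_B[(\mathbb{I}\otimes\Pi_k^B)\rho^{AB}(\mathbb{I}\otimes\Pi_k^B)]/p_k$, and $S(\rho^A|\{\Pi_k^B\})=\sum_kp_kS(\rho^A_k)$ with $S(\rho)=-\mathrm{Tr}(\rho\log_2\rho)$. $h_2(x)=-x\log_2x-(1-x)\log_2(1-x)$. *)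

(* Defs.v *)
From HB Require Import structures.
From mathcomp Require Import all_boot all_order all_algebra.
From mathcomp Require Import complex mxtens.
From mathcomp Require Import reals exp.

Set Implicit Arguments.
Unset Strict Implicit.
Unset Printing Implicit Defensive.

Import Order.TTheory GRing.Theory Num.Theory.
Local Open Scope ring_scope.

Section QDefs.
Variable R : realType.
Local Notation C := R[i].

Definition RtoC (a : R) : C := Complex a 0.

Definition adjmx {m n} (A : 'M[C]_(m, n)) : 'M[C]_(n, m) := map_mx (@conjc R) A^T.

(* Pauli matrices sigma_1, sigma_2, sigma_3, indexed by 'I_3 = {0,1,2} *)
Definition pauli (k : 'I_3) : 'M[C]_2 :=
  \matrix_(a < 2, b < 2)
    match nat_of_ord k with
    | 0 => if a != b then 1 else 0
    | 1 => if a == b then 0 else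
             (if (nat_of_ord a == 0)%N then Complex 0 (-1) else Complex 0 1)
    | _ => if a == b then (if (nat_of_ord a == 0)%N then 1 else -1) else 0
    end.

Definition dot_sigma (a : 'cV[R]_3) : 'M[C]_2 :=
  \sum_(k < 3) RtoC (a k 0) *: pauli k.

Definition rhoAB (x t : 'cV[R]_3) : 'M[C]_(2 * 2) :=
  RtoC (4%:R^-1) *:
    ((1 : 'M[C]_2) *t (1 : 'M[C]_2) + dot_sigma x *t (1 : 'M[C]_2)
     + \sum_(k < 3) RtoC (t k 0) *: (pauli k *t pauli k)).

Definition is_density_matrix {n} (rho : 'M[C]_n) : Prop :=
  [/\ adjmx rho = rho,
      (forall v : 'cV[C]_n, 0 <= (adjmx v *m rho *m v) 0 0)
    & \tr rho = 1].

Definition projB (n : 'cV[R]_3) (k : 'I_2) : 'M[C]_2 :=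
  RtoC (2%:R^-1) *: (1 + ((-1) ^+ k) *: dot_sigma n).

Definition post_meas (rho : 'M[C]_(2 * 2)) (n : 'cV[R]_3) (k : 'I_2) : 'M[C]_(2 * 2) :=
  ((1 : 'M[C]_2) *t projB n k) *m rho *m ((1 : 'M[C]_2) *t projB n k).

Definition ptraceB (M : 'M[C]_(2 * 2)) : 'M[C]_2 :=
  \matrix_(i < 2, j < 2) \sum_(l < 2) M (mxtens_index (i, l)) (mxtens_index (j, l)).

(* p_k = Tr[...] (a real number for a density matrix; we take its real part) *)
Definition meas_prob (rho : 'M[C]_(2 * 2)) (n : 'cV[R]_3) (k : 'I_2) : R :=
  complex.Re (\tr (post_meas rho n k)).

Definition cond_stateA (rho : 'M[C]_(2 * 2)) (n : 'cV[R]_3) (k : 'I_2) : 'M[C]_2 :=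
  RtoC ((meas_prob rho n k)^-1) *: ptraceB (post_meas rho n k).

(* base-2 logarithm; note ln 0 = 0 in mathcomp-analysis, so x log2 x = 0 at x = 0 *)
Definition log2 (x : R) : R := ln x / ln 2.

Definition h2 (x : R) : R := - x * log2 x - (1 - x) * log2 (1 - x).

Definition eigenvalues {n} (A : 'M[C]_n) : seq C :=
  sval (closed_field_poly_normal (char_poly A)).

(* von Neumann entropy S(rho) = -Tr(rho log2 rho) = - sum_lambda lambda log2 lambda
   over the eigenvalues of the (Hermitian) matrix rho *)
Definition vN_entropy {n} (rho : 'M[C]_n) : R :=
  - \sum_(z <- eigenvalues rho) (complex.Re z * log2 (complex.Re z)).

Definition cond_entropy (rho : 'M[C]_(2 * 2)) (n : 'cV[R]_3) : R :=
  \sum_(k < 2) meas_prob rho n k * vN_entropy (cond_stateA rho n k).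

Definition sqnorm3 (a : 'cV[R]_3) : R := \sum_(k < 3) a k 0 ^+ 2.

Definition is_unit3 (a : 'cV[R]_3) : Prop := sqnorm3 a = 1.

Definition tmax (t : 'cV[R]_3) : R :=
  Num.max `|t 0 0| (Num.max `|t 1 0| `|t 2%:R 0|).

End QDefs.

(* Main.v *)
Require Import Defs.
From HB Require Import structures.
From mathcomp Require Import all_boot all_order all_algebra.
From mathcomp Require Import complex mxtens.
From mathcomp Require Import reals exp.
From mathcomp Require Import ring lra.
Import Order.TTheory GRing.Theory Num.Theory.
Local Open Scope ring_scope.
Set Implicit Arguments. Unset Strict Implicit.

Section Q.
Variable R : realType.
Local Notation C := R[i].

Lemma sum3 (V : nmodType) (F : 'I_3 -> V) : \sum_(k < 3) F k = F 0 + F 1 + F 2%:R.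
Proof.
rewrite !big_ord_recl big_ord0 addr0 addrA.
by congr (F _ + F _ + F _); apply: val_inj.
Qed.

Lemma sum2 (V : nmodType) (F : 'I_2 -> V) : \sum_(k < 2) F k = F 0 + F 1.
Proof.
rewrite !big_ord_recl big_ord0 addr0.
by congr (F _ + F _); apply: val_inj.
Qed.

Lemma ord2P (i : 'I_2) : i = 0 \/ i = 1.
Proof. case: i => [[|[|m]] Hm]; [left|right|by []]; exact: val_inj. Qed.

Lemma ord3P (i : 'I_3) : [\/ i = 0, i = 1 | i = 2%:R].
Proof. case: i => [[|[|[|m]]] Hm]; [apply: Or31|apply: Or32|apply: Or33|by []]; exact: val_inj. Qed.

Lemma c1E : (1 : C) = Complex 1 0. Proof. by []. Qed.
Lemma c0E : (0 : C) = Complex 0 0. Proof. by []. Qed.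

Lemma dsE (a : 'cV[R]_3) : dot_sigma a =
  \matrix_(i < 2, j < 2)
   if i == 0 then (if j == 0 then Complex (a 2%:R 0) 0 else Complex (a 0 0) (- a 1 0))
   else (if j == 0 then Complex (a 0 0) (a 1 0) else Complex (- a 2%:R 0) 0).
Proof.
apply/matrixP => i j; rewrite /dot_sigma summxE sum3 !mxE.
by case: (ord2P i) => ->; case: (ord2P j) => -> /=; rewrite /RtoC; simpc.
Qed.

Section Tens.
Variables (m n p q : nat).
Lemma tensDl (A B : 'M[C]_(m,n)) (M : 'M[C]_(p,q)) : (A + B) *t M = A *t M + B *t M.
Proof. by apply/matrixP => i j; rewrite !mxE mulrDl. Qed.
Lemma tensZl c (A : 'M[C]_(m,n)) (M : 'M[C]_(p,q)) : (c *: A) *t M = c *: (A *t M).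
Proof. by apply/matrixP => i j; rewrite !mxE mulrA. Qed.
End Tens.

Definition fB (P M : 'M[C]_(2 * 2)) := ptraceB (P *m M *m P).

Lemma ptraceBD (M N : 'M[C]_(2*2)) : ptraceB (M + N) = ptraceB M + ptraceB N.
Proof. by apply/matrixP => i j; rewrite !mxE -big_split; apply: eq_bigr => l _; rewrite mxE. Qed.
Lemma fBD P M N : fB P (M + N) = fB P M + fB P N.
Proof. by rewrite /fB mulmxDr mulmxDl ptraceBD. Qed.
Lemma fBZ P c M : fB P (c *: M) = c *: fB P M.
Proof. by rewrite /fB -scalemxAr -scalemxAl; apply/matrixP => i j; rewrite !mxE mulr_sumr; apply: eq_bigr => l _; rewrite mxE. Qed.
Lemma fBsum P (F : 'I_3 -> 'M[C]_(2*2)) : fB P (\sum_k F k) = \sum_k fB P (F k).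
Proof. by rewrite !sum3 !fBD. Qed.

Lemma ptraceB_tens (A B : 'M[C]_2) : ptraceB (A *t B) = \tr B *: A.
Proof.
apply/matrixP => i j; rewrite !mxE /mxtrace mulr_suml; apply: eq_bigr => l _.
by rewrite tensmxE mulrC.
Qed.

Lemma fB_tens (P A B : 'M[C]_2) : fB (1 *t P) (A *t B) = \tr (P *m B *m P) *: A.
Proof. by rewrite /fB !tensmx_mul mul1mx mulmx1 ptraceB_tens. Qed.


Ltac cfin := rewrite /RtoC ?c1E ?c0E; simpc; apply/eqP; rewrite eq_complex /=; apply/andP; split; apply/eqP.

Definition Tn (t n : 'cV[R]_3) : 'cV[R]_3 := \col_(i < 3) (t i 0 * n i 0).

Lemma projB_idem (n : 'cV[R]_3) k : is_unit3 n -> projB n k *m projB n k = projB n k.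
Proof.
rewrite /is_unit3 /sqnorm3 sum3 => Hn.
rewrite /projB dsE; apply/matrixP => i j.
rewrite !mxE !sum2 !mxE.
case: (ord2P k) => -> /=; rewrite ?expr0 ?expr1;
case: (ord2P i) => -> /=; case: (ord2P j) => -> /=; cfin; nra.
Qed.

Lemma tr_proj (n : 'cV[R]_3) k : \tr (projB n k) = 1.
Proof.
rewrite /projB dsE /mxtrace sum2 !mxE /=.
case: (ord2P k) => -> /=; rewrite ?expr0 ?expr1; cfin; nra.
Qed.

Lemma tr_pauli_proj (n : 'cV[R]_3) (k : 'I_2) (j : 'I_3) :
  \tr (pauli R j *m projB n k) = RtoC ((-1) ^+ k * n j 0).
Proof.
rewrite /projB dsE /mxtrace sum2 !mxE !sum2 !mxE /=.
case: (ord2P k) => -> /=; rewrite ?expr0 ?expr1;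
case: (ord3P j) => -> /=; cfin; nra.
Qed.

Lemma ptrace_post (x t n : 'cV[R]_3) k : is_unit3 n ->
  ptraceB (post_meas (rhoAB x t) n k) =
  RtoC (4%:R^-1) *: (1 + dot_sigma (x + ((-1) ^+ k) *: Tn t n)).
Proof.
move=> Hn.
have E : ptraceB (post_meas (rhoAB x t) n k) = fB (1 *t projB n k) (rhoAB x t) by [].
rewrite E /rhoAB fBZ !fBD fBsum !fB_tens mulmx1 projB_idem // tr_proj.
under eq_bigr do rewrite fBZ fB_tens mxtrace_mulC mulmxA projB_idem // mxtrace_mulC tr_pauli_proj.
congr (_ *: _); rewrite !scale1r -addrA; congr (_ + _).
apply/matrixP => i j; rewrite !dsE !mxE !summxE !sum3 !mxE.
case: (ord2P i) => -> /=; case: (ord2P j) => -> /=.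
all: (cfin; ring).
Qed.
End Q.
Section Q.
Variable R : realType.
Local Notation C := R[i].
Ltac cfin := rewrite /RtoC ?c1E ?c0E; simpc; apply/eqP; rewrite eq_complex /=; apply/andP; split; apply/eqP.

Lemma tr_ptraceB (M : 'M[C]_(2*2)) : \tr M = \tr (ptraceB M).
Proof.
rewrite /mxtrace (reindex (@mxtens_index 2 2)) /=; last first.
  by exists (@mxtens_unindex 2 2) => ? _; [apply: mxtens_indexK | apply: mxtens_unindexK].
under [RHS]eq_bigr do rewrite mxE.
rewrite pair_big /=.
by apply: eq_bigr => [[i l]].
Qed.

Lemma tr_half (w : 'cV[R]_3) : \tr (RtoC (4%:R^-1) *: (1 + dot_sigma w)) = RtoC (2%:R^-1).
Proof. rewrite /mxtrace sum2 dsE !mxE /=; cfin; lra. Qed.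

Lemma det2 (A : 'M[C]_2) : \det A = A 0 0 * A 1 1 - A 0 1 * A 1 0.
Proof.
rewrite (expand_det_row _ 0) sum2 /cofactor !det_mx11 !mxE /=.
have -> : lift 0 (0 : 'I_1) = 1 :> 'I_2 by apply: val_inj.
have -> : lift 1 (0 : 'I_1) = 0 :> 'I_2 by apply: val_inj.
by rewrite expr0 expr1 mul1r mulN1r mulrN.
Qed.

Lemma poly2 (a b : C) : ('X - a%:P) * ('X - b%:P) = 'X^2 + (- (a + b))%:P * 'X + (a * b)%:P.
Proof. rewrite polyCN polyCD polyCM; ring. Qed.


Lemma eig2 (M : 'M[C]_2) : exists a b, eigenvalues M = [:: a; b] /\
  a + b = \tr M /\ a * b = \det M.
Proof.
rewrite /eigenvalues; case: (closed_field_poly_normal (char_poly M)) => s /= Hs.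
move: (Hs); rewrite (monicP (char_poly_monic M)) scale1r => Hs1.
have : size s = 2%N.
  by have := size_prod_XsubC s id; rewrite -Hs1 size_char_poly => -[].
case: s Hs Hs1 => [|a [|b [|? ?]]] //= _ Hs1 _.
exists a, b; split => //.
move: Hs1; rewrite !big_cons big_nil mulr1 poly2 => Hs1.
have H1 := char_poly_trace M; have H0 := char_poly_det M.
rewrite Hs1 /= in H1 H0.
move: H1 H0; rewrite !coefE /= => /(_ isT) H1 H0; split.
  by apply: oppr_inj; rewrite -H1 add0r addr0 mulr1.
by rewrite sqrrN expr1n mul1r in H0; rewrite -H0 add0r mulr0 add0r.
Qed.


Lemma vN_half (w : 'cV[R]_3) :
  vN_entropy (RtoC (2%:R^-1) *: (1 + dot_sigma w)) = h2 ((1 + Num.sqrt (sqnorm3 w)) / 2%:R).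
Proof.
set r := Num.sqrt (sqnorm3 w).
have r2 : r ^+ 2 = \sum_(k < 3) w k 0 ^+ 2.
  by rewrite sqr_sqrtr // sumr_ge0 // => k _; exact: sqr_ge0.
rewrite sum3 in r2.
set M := RtoC _ *: _.
have [a [b [Hab [Ht Hd]]]] := eig2 M.
have trM : \tr M = 1 by rewrite /M /mxtrace sum2 dsE !mxE /=; cfin; lra.
have detM : \det M = RtoC ((1 + r) / 2%:R * ((1 - r) / 2%:R)).
  rewrite /M det2 dsE !mxE /=; cfin; lra.
have E : (a - RtoC ((1 + r) / 2%:R)) * (a - RtoC ((1 - r) / 2%:R)) = 0.
  have : a * a - a * (a + b) + a * b = 0 by ring.
  rewrite Ht Hd trM detM => <-.
  by case: a {Ht Hd Hab} => a1 a2; cfin; field.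
have Hb : b = 1 - a by rewrite -trM -Ht addrC addKr.
have ReB : complex.Re b = 1 - complex.Re a by rewrite Hb; case: (a).
rewrite /vN_entropy Hab !big_cons big_nil addr0 ReB /h2.
move/eqP: E; rewrite mulf_eq0 !subr_eq0 => /orP[] /eqP ->; rewrite /RtoC /=.
  by ring.
have -> : 1 - (1 - r) / 2%:R = (1 + r) / 2%:R by field.
have -> : 1 - (1 + r) / 2%:R = (1 - r) / 2%:R by field.
ring.
Qed.

End Q.
Section Q.
Variable R : realType.

Lemma tangent (u v : R) : 0 < u -> 0 < v ->
  u * ln u + (ln u + 1) * (v - u) <= v * ln v.
Proof.
move=> u0 v0.
have h := le_ln1Dx (x := u / v - 1).
have h1 : -1 < u / v - 1 by rewrite ltrBrDr addrC subrr divr_gt0.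
move: (h h1); rewrite addrC subrK ln_div ?posrE // => h2.
have h3 : v * (ln u - ln v) <= v * (u / v - 1) by rewrite ler_wpM2l // ltW.
have e : v * (u / v - 1) = u - v by field; rewrite gt_eqF.
lra.
Qed.

Definition phi (a : R) := a * ln a + (1 - a) * ln (1 - a).

Lemma phi_mono (a b : R) : 2%:R^-1 <= a -> a <= b -> phi a <= phi b.
Proof.
move=> ha hab; rewrite /phi.
have a0 : 0 < a by apply: lt_le_trans ha; rewrite invr_gt0 ltr0n.
have b0 : 0 < b by apply: lt_le_trans hab.
have [b1|b1] := ltP b 1.
  have a1 : 0 < 1 - a by rewrite subr_gt0; apply: le_lt_trans b1.
  have b1' : 0 < 1 - b by rewrite subr_gt0.
  have T1 := tangent a0 b0.
  have T2 := tangent a1 b1'.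
  have L : ln (1 - a) <= ln a.
    rewrite ler_ln ?posrE //.
    have : 2%:R^-1 + 2%:R^-1 = 1 :> R by field.
    lra.
  have P : 0 <= (b - a) * (ln a - ln (1 - a)) by apply: mulr_ge0; lra.
  lra.
rewrite [ln (1 - b)]ln0; last by lra.
have lb : 0 <= ln b by apply: ln_ge0.
have [a1|a1] := ltP a 1.
  have la : ln a <= 0 by apply: ln_le0; lra.
  have la' : ln (1 - a) <= 0 by apply: ln_le0; lra.
  have : 0 < 1 - a by lra.
  nra.
rewrite [ln (1 - a)]ln0; last by lra.
have la : 0 <= ln a by apply: ln_ge0.
have lab : ln a <= ln b by rewrite ler_ln ?posrE.
nra.
Qed.

Lemma h2_phi (a : R) : h2 a = - phi a / ln 2%:R.
Proof.
have l2 : 0 < ln (2%:R : R) by apply: ln_gt0; rewrite ltr1n.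
rewrite /h2 /phi /log2; field; exact: lt0r_neq0.
Qed.

Lemma h2_mono (r r' : R) : 0 <= r -> r <= r' ->
  h2 ((1 + r') / 2%:R) <= h2 ((1 + r) / 2%:R).
Proof.
move=> r0 rr.
have l2 : 0 < ln (2%:R : R) by apply: ln_gt0; rewrite ltr1n.
rewrite !h2_phi ler_pM2r ?invr_gt0 // lerN2; apply: phi_mono.
  have : (1 + r) / 2%:R = 2%:R^-1 + r / 2%:R :> R by field.
  move=> ->; rewrite lerDl divr_ge0 //.
by rewrite ler_pM2r ?invr_gt0 ?ltr0n // lerD2l.
Qed.

End Q.
Section Q.
Variable R : realType.
Local Notation C := R[i].
Ltac cfin := rewrite /RtoC ?c1E ?c0E; simpc; apply/eqP; rewrite eq_complex /=; apply/andP; split; apply/eqP.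

Lemma sq_orth (a c m s : R) : c * a = 0 -> s ^+ 2 = 1 -> (a + s * (c * m)) ^+ 2 = a ^+ 2 + (c * m) ^+ 2.
Proof.
move=> h hs.
have -> : (a + s * (c * m)) ^+ 2 = a ^+ 2 + s ^+ 2 * (c * m) ^+ 2 + 2%:R * s * m * (c * a) by ring.
by rewrite h hs mulr0 addr0 mul1r.
Qed.

Lemma cond_ent (x t n : 'cV[R]_3) : is_unit3 n -> (diag_mx t^T)^T *m x = 0 ->
  cond_entropy (rhoAB x t) n = h2 ((1 + Num.sqrt (sqnorm3 x + sqnorm3 (Tn t n))) / 2%:R).
Proof.
move=> Hn hT.
have ht : forall i, t i 0 * x i 0 = 0.
  move=> i; have := congr1 (fun M : 'cV[R]_3 => M i 0) hT.
  by rewrite /= tr_diag_mx mul_diag_mx !mxE.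
have Hk : forall k : 'I_2, meas_prob (rhoAB x t) n k * vN_entropy (cond_stateA (rhoAB x t) n k)
   = 2%:R^-1 * h2 ((1 + Num.sqrt (sqnorm3 x + sqnorm3 (Tn t n))) / 2%:R).
  move=> k.
  have hp : meas_prob (rhoAB x t) n k = 2%:R^-1.
    by rewrite /meas_prob tr_ptraceB ptrace_post // tr_half.
  rewrite /cond_stateA hp ptrace_post // scalerA.
  have -> : RtoC (2%:R^-1^-1) * RtoC (4%:R^-1) = RtoC (2%:R^-1) :> C.
    by cfin; field.
  rewrite (vN_half (x + _)); congr (_ * h2 ((1 + Num.sqrt _) / _)).
  have hs : ((-1) ^+ k : R) ^+ 2 = 1 by rewrite -exprM mulnC exprM sqrrN expr1n expr1n.
  rewrite /sqnorm3 !sum3 !mxE !sq_orth //.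
  move: (x 0 0 ^+ 2) (x 1 0 ^+ 2) (x 2%:R 0 ^+ 2) ((t 0 0 * n 0 0) ^+ 2) ((t 1 0 * n 1 0) ^+ 2) ((t 2%:R 0 * n 2%:R 0) ^+ 2) => a0 a1 a2 b0 b1 b2.
  ring.
set H := h2 _.
transitivity (\sum_(k < 2) 2%:R^-1 * H); first by apply: eq_bigr => k _; exact: Hk.
clearbody H; by rewrite sum2; field.
Qed.


Lemma eigen_entries (t n : 'cV[R]_3) (i : 'I_3) :
  (((diag_mx t^T)^T *m diag_mx t^T) *m n) i 0 = t i 0 ^+ 2 * n i 0.
Proof. by rewrite tr_diag_mx -mulmxA !mul_diag_mx !mxE mulrA expr2. Qed.

Lemma Tn_le (t n : 'cV[R]_3) : is_unit3 n -> sqnorm3 (Tn t n) <= tmax t ^+ 2.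
Proof.
rewrite /is_unit3 /sqnorm3 => Hn.
have tm0 : 0 <= tmax t by rewrite /tmax le_max normr_ge0.
have hi : forall i : 'I_3, t i 0 ^+ 2 <= tmax t ^+ 2.
  move=> i; rewrite -real_normK ?num_real // lerXn2r ?nnegrE ?normr_ge0 //.
  rewrite /tmax; case: (ord3P i) => ->; rewrite ?le_max ?lexx ?orbT //.
have -> : tmax t ^+ 2 = \sum_(k < 3) tmax t ^+ 2 * n k 0 ^+ 2 by rewrite -mulr_sumr Hn mulr1.
apply: ler_sum => i _; rewrite mxE exprMn; apply: ler_wpM2r; [exact: sqr_ge0 | exact: hi].
Qed.

Lemma Tn_eig (t n : 'cV[R]_3) : is_unit3 n ->
  ((diag_mx t^T)^T *m diag_mx t^T) *m n = tmax t ^+ 2 *: n ->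
  sqnorm3 (Tn t n) = tmax t ^+ 2.
Proof.
rewrite /is_unit3 /sqnorm3 => Hn He.
have hi : forall i, t i 0 ^+ 2 * n i 0 = tmax t ^+ 2 * n i 0.
  by move=> i; rewrite -eigen_entries He mxE.
rewrite -[RHS]mulr1 -Hn mulr_sumr; apply: eq_bigr => i _.
by rewrite mxE exprMn !expr2 mulrA -expr2 hi mulrA -expr2.
Qed.

End Q.

Lemma tmax_attained (R : realType) (t : 'cV[R]_3) : exists j : 'I_3, `|t j 0| = tmax t.
Proof.
have [j [h0 h1 h2]] : exists j : 'I_3, [/\ `|t 0 0| <= `|t j 0|, `|t 1 0| <= `|t j 0| & `|t 2%:R 0| <= `|t j 0|].
  have [h|h] := leP `|t 1 0| `|t 2%:R 0|.
    have [h'|h'] := leP `|t 0 0| `|t 2%:R 0|; first by exists 2%:R; split.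
    by exists 0; split => //; [apply: le_trans h (ltW h') | apply: ltW].
  have [h'|h'] := leP `|t 0 0| `|t 1 0|; first by exists 1; split => //; apply: ltW.
  by exists 0; split => //; apply: ltW => //; apply: lt_trans h'.
exists j; apply/eqP; rewrite eq_le /tmax !ge_max h0 h1 h2 /=.
by case: (ord3P j) => ->; rewrite !le_max lexx ?orbT.
Qed.

Theorem mainTheorem3 (R : realType) (x t : 'cV[R]_3) :
  is_density_matrix (rhoAB x t) ->
  (diag_mx t^T)^T *m x = 0 ->
  let val := h2 ((1 + Num.sqrt (sqnorm3 x + tmax t ^+ 2)) / 2%:R) in
  (forall n : 'cV[R]_3, is_unit3 n -> val <= cond_entropy (rhoAB x t) n) /\
  (exists n : 'cV[R]_3, is_unit3 n /\ cond_entropy (rhoAB x t) n = val) /\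
  (forall n : 'cV[R]_3, is_unit3 n ->
     ((diag_mx t^T)^T *m diag_mx t^T) *m n = tmax t ^+ 2 *: n ->
     cond_entropy (rhoAB x t) n = val).
Proof.
move=> _ hT val.
have P3 : forall n : 'cV[R]_3, is_unit3 n ->
     ((diag_mx t^T)^T *m diag_mx t^T) *m n = tmax t ^+ 2 *: n ->
     cond_entropy (rhoAB x t) n = val.
  by move=> n Hn He; rewrite cond_ent // Tn_eig.
split; [|split] => //.
  move=> n Hn; rewrite cond_ent //; apply: h2_mono; first exact: sqrtr_ge0.
  by apply: ler_wsqrtr; rewrite lerD2l Tn_le.
have [j Hj] := tmax_attained t.
pose n : 'cV[R]_3 := \col_i (if i == j then 1 else 0).
have Hn : is_unit3 n.
  rewrite /is_unit3 /sqnorm3 (bigD1 j) //= big1 => [|i /negbTE hij]; rewrite mxE ?eqxx ?hij.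
    by rewrite expr1n addr0.
  by rewrite expr0n.
exists n; split => //; apply: P3 => //.
apply/matrixP => i k; rewrite (ord1 k) eigen_entries !mxE.
case: eqP => [->|_]; last by rewrite !mulr0.
by rewrite -Hj real_normK // num_real.
Qed.
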